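(* Let $d\ge3$, $h\ge1$, $1\le n\le h$, and let $j$ be a vertex at distance $n$ from the root, with parent $p(j)$. Then in $G(d,h)$, $$\theta(d,h+2-n)\,\bar{\mathbf{x}}_j-\theta(d,h+1-n)\,\bar{\mathbf{x}}_{p(j)}=0,$$ where $\theta(d,m):=\frac{(d-1)^m-1}{d-2}$.
   Context: Let $\mathcal{T}(d,h)$ be the rooted tree in which the root $0$ has $d$ children, every vertex at distance $1,\dots,h-1$ from the root has $d-1$ children, and the vertices at distance $h$ are leaves. Let $V$ be its vertex set, $A$ its adjacency matrix, $\Delta := dI-A$, and $\Lambda\subset\mathbb{Z}^V$ the lattice spanned by the rows of $\Delta$. Then $G(d,h):=\mathbb{Z}^V/\Lambda$; $\{\mathbf{x}_i:i\in V\}$ is the standard basis of $\mathbb{Z}^V$ and $\bar{\mathbf{v}}$ denotes the image of $\mathbf{v}$ in $G(d,h)$. *)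

(* Defs.v *)
From HB Require Import structures.
From mathcomp Require Import all_boot all_order all_algebra.
Set Implicit Arguments. Unset Strict Implicit. Unset Printing Implicit Defensive.
Import Order.TTheory GRing.Theory Num.Theory.

(* A vertex of T(d,h) at depth k (0 <= k <= h) is encoded by the path of
   child indices from the root: (k, t) with t : h.-tuple 'I_d, where
   t_0 < d (root has d children), t_i < d-1 for 1 <= i < k (other internal
   vertices have d-1 children), and t_i = 0 for i >= k (padding, so the
   encoding is unique). *)
Definition vtx_ok (d h : nat) (v : 'I_h.+1 * h.-tuple 'I_d) : bool :=
  [forall i : 'I_h,
     if (i < v.1)%N then ((0 < i)%N ==> (val (tnth v.2 i) < d.-1)%N)
     else val (tnth v.2 i) == 0%N].

Definition vertex (d h : nat) := {v : 'I_h.+1 * h.-tuple 'I_d | @vtx_ok d h v}.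

Definition depth d h (v : vertex d h) : nat := val (val v).1.

Definition is_parent d h (u w : vertex d h) : bool :=
  (depth w == (depth u).+1) &&
  [forall i : 'I_h, (i < depth u)%N ==> (tnth (val u).2 i == tnth (val w).2 i)].

Definition adj d h (u w : vertex d h) : bool := is_parent u w || is_parent w u.

Definition Delta d h (u w : vertex d h) : int :=
  ((Posz d) * Posz (u == w : nat) - Posz (adj u w : nat))%R.

(* x : Z^V lies in the lattice Lambda spanned by the rows of Delta,
   i.e. its image in G(d,h) = Z^V / Lambda is zero. *)
Definition in_lattice d h (x : vertex d h -> int) : Prop :=
  exists c : vertex d h -> int,
    forall v, x v = (\sum_(u : vertex d h) c u * Delta u v)%R.

Definition xb d h (i : vertex d h) : vertex d h -> int :=
  fun v => Posz (v == i : nat).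

(* theta(d,m) = ((d-1)^m - 1)/(d-2)  (exact division for d >= 3) *)
Definition theta (d m : nat) : nat := ((d.-1 ^ m - 1) %/ (d - 2))%N.

(* Main.v *)
Require Import Defs.
From mathcomp Require Import all_boot all_order all_algebra.
From mathcomp Require Import zify ring.
Import GRing.Theory.

Fixpoint gsum (q m : nat) : nat := if m is m'.+1 then (1 + q * gsum q m')%N else 0%N.

Lemma gsumE q m : (1 <= q)%N -> ((q - 1) * gsum q m = q ^ m - 1)%N.
Proof.
move=> hq; elim: m => [|m IH] /=; first by rewrite muln0 expn0.
have hX : (1 <= q ^ m)%N by rewrite expn_gt0; lia.
rewrite expnS. move: IH hX; set X := q ^ m; set G := gsum q m => IH hX. nia.
Qed.

Lemma thetaE d m : (3 <= d)%N -> theta d m = gsum d.-1 m.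
Proof.
move=> hd; rewrite /theta -gsumE; last lia.
have -> : (d - 2 = d.-1 - 1)%N by lia.
by rewrite mulKn //; lia.
Qed.

Lemma theta_rec d k : (3 <= d)%N ->
  (theta d k.+2 + d.-1 * theta d k = d * theta d k.+1)%N.
Proof.
move=> hd; rewrite !thetaE //=.
set G := gsum d.-1 k. have hq : d = (d.-1).+1 by lia.
nia.
Qed.

Lemma theta0 d : theta d 0 = 0%N.
Proof. by rewrite /theta expn0 subnn div0n. Qed.

Section Lat.
Variables d h : nat.
Notation V := (vertex d h).

Lemma lat_ext (f g : V -> int) : in_lattice f -> (forall v, f v = g v) -> in_lattice g.
Proof. by move=> [c hc] e; exists c => v; rewrite -e hc. Qed.

Lemma lat_row (u : V) : in_lattice (fun v => Delta u v).
Proof.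
exists (xb u) => v; rewrite (bigD1 u) //= /xb eqxx mul1r big1 ?addr0 //.
by move=> u' /negbTE ->; rewrite mul0r.
Qed.

Lemma lat_add (f g : V -> int) : in_lattice f -> in_lattice g -> in_lattice (fun v => f v + g v)%R.
Proof.
move=> [c hc] [c' hc']; exists (fun u => c u + c' u)%R => v.
by rewrite hc hc' -big_split /=; apply: eq_bigr => u _; rewrite mulrDl.
Qed.

Lemma lat_scale (a : int) (f : V -> int) : in_lattice f -> in_lattice (fun v => a * f v)%R.
Proof.
move=> [c hc]; exists (fun u => a * c u)%R => v.
by rewrite hc big_distrr /=; apply: eq_bigr => u _; rewrite mulrA.
Qed.

Lemma lat_sum (P : pred V) (F : V -> V -> int) :
  (forall w, P w -> in_lattice (F w)) -> in_lattice (fun v => \sum_(w | P w) F w v)%R.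
Proof.
move=> H.
have [cf hcf] : exists cf : V -> V -> int, forall w, P w -> forall v,
    F w v = (\sum_(u : V) cf w u * Delta u v)%R.
  apply: (@fin_all_exists _ (fun _ => V -> int) (fun w c => P w -> forall v, F w v = (\sum_(u : V) c u * Delta u v)%R)).
  move=> w; case: (boolP (P w)) => Pw.
    by have [c hc] := H w Pw; exists c.
  by exists (fun _ => 0%R).
exists (fun u => \sum_(w | P w) cf w u)%R => v.
symmetry; under eq_bigr => u _ do rewrite mulr_suml.
rewrite exchange_big /=; apply: eq_bigr => w Pw; symmetry; exact: hcf.
Qed.
End Lat.
Arguments lat_ext {d h}.
Arguments lat_row {d h}.
Arguments lat_add {d h}.
Arguments lat_scale {d h}.
Arguments lat_sum {d h}.

Section Vtx.
Variables d h : nat.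
Notation V := (vertex d h).

Lemma okP (v : V) (i : 'I_h) :
  if (i < depth v)%N then ((0 < i)%N ==> (val (tnth (val v).2 i) < d.-1)%N)
  else val (tnth (val v).2 i) == 0%N.
Proof. exact: (forallP (valP v)) i. Qed.

Lemma depth_le (v : V) : (depth v <= h)%N.
Proof. by rewrite /depth -ltnS ltn_ord. Qed.

Lemma vtx_eq (u u' : V) : depth u = depth u' ->
  (forall i : 'I_h, (i < depth u)%N -> tnth (val u).2 i = tnth (val u').2 i) -> u = u'.
Proof.
move=> hd ht; apply: val_inj.
have e2 : (val u).2 = (val u').2.
  apply: eq_from_tnth => i; case: (ltnP i (depth u)) => hi; first exact: ht.
  have := okP u i; have := okP u' i; rewrite -hd ltnNge hi /= => /eqP h1 /eqP h2.
  by apply: ord_inj; rewrite h1 h2.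
have e1 : (val u).1 = (val u').1 by apply: val_inj.
by case: (val u) (val u') e1 e2 => [a t] [a' t'] /= -> ->.
Qed.

Lemma parent_uniq (u u' j : V) : is_parent u j -> is_parent u' j -> u = u'.
Proof.
move=> /andP [/eqP h1 /forallP h2] /andP [/eqP h1' /forallP h2'].
have hd : depth u = depth u' by lia.
apply: vtx_eq => // i hi.
have := h2 i; have := h2' i; rewrite hi -hd hi /= => /eqP -> /eqP -> //.
Qed.

Lemma parent_depth (u w : V) : is_parent u w -> depth w = (depth u).+1.
Proof. by case/andP => /eqP. Qed.

Definition mkch (j : V) (a : 'I_d) : 'I_h.+1 * h.-tuple 'I_d :=
  (inord (depth j).+1, [tuple (if (i : nat) == depth j then a else tnth (val j).2 i) | i < h]).

Lemma mkch_ok (j : V) (a : 'I_d) : (0 < depth j)%N -> (depth j < h)%N -> (a < d.-1)%N ->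
  vtx_ok (mkch j a).
Proof.
move=> h0 hh ha; apply/forallP => i /=; rewrite inordK; last by rewrite ltnS.
rewrite tnth_mktuple; have := okP j i.
case: (ltngtP i (depth j)) => hi.
- by rewrite ltnS (ltnW hi).
- by rewrite ltnS leqNgt hi.
- by rewrite hi ltnSn /= ha implybT.
Qed.

Lemma mkch_parent (j : V) (a : 'I_d) (Ha : vtx_ok (mkch j a)) : (depth j < h)%N ->
  is_parent j (exist (fun v => vtx_ok v) _ Ha : V).
Proof.
move=> hh; apply/andP; split.
  by rewrite /depth /= inordK // ltnS.
apply/forallP => i; apply/implyP => hi /=.
by rewrite tnth_mktuple (ltn_eqF hi).
Qed.

Lemma card_children (j : V) (hh : (depth j < h)%N) : (0 < depth j)%N ->
  #|[set w | is_parent j w]| = d.-1.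
Proof.
move=> h0.
pose k : 'I_h := Ordinal hh.
pose phi (w : V) := tnth (val w).2 k.
have inj : {in [set w | is_parent j w] &, injective phi}.
  move=> w w'; rewrite !inE => /andP [/eqP e1 /forallP e2] /andP [/eqP e1' /forallP e2'] ep.
  apply: vtx_eq; first by rewrite e1 e1'.
  move=> i; rewrite e1 ltnS leq_eqVlt => /orP [/eqP hi | hi].
    by have -> : i = k by apply: val_inj. 
  by have := e2 i; have := e2' i; rewrite hi /= => /eqP <- /eqP <-.
rewrite -(card_in_imset inj).
have -> : phi @: [set w | is_parent j w] = [set a : 'I_d | (a < d.-1)%N].
  apply/setP => a; rewrite inE; apply/imsetP/idP.
    move=> [w]; rewrite inE => /andP [/eqP e1 _] ->.
    have := okP w k; rewrite e1 ltnS leqnn /=.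
    by rewrite /k /= h0.
  move=> ha; have Ha := @mkch_ok j a h0 hh ha.
  exists (exist (fun v => vtx_ok v) _ Ha : V); first by rewrite inE; exact: mkch_parent.
  by rewrite /phi /= tnth_mktuple /= eqxx.
have hd : (d.-1 <= d)%N by apply: leq_pred.
have winj : injective (widen_ord hd) by move=> x y /(congr1 val) /= /ord_inj.
rewrite -[RHS](card_ord d.-1) -(card_imset _ winj).
apply: eq_card => a; rewrite inE; apply/idP/imsetP.
  by move=> ha; exists (Ordinal ha) => //; apply: val_inj.
by move=> [b _ ->] /=.
Qed.

Lemma no_children (j w : V) : depth j = h -> ~~ is_parent j w.
Proof.
move=> e; apply/negP => /parent_depth; have := depth_le w; lia.
Qed.
End Vtx.
Arguments okP {d h}.
Arguments depth_le {d h}.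
Arguments vtx_eq {d h}.
Arguments parent_uniq {d h}.
Arguments parent_depth {d h}.
Arguments card_children {d h}.
Arguments no_children {d h}.

Section Main.
Variables d h : nat.
Hypothesis hd : (3 <= d)%N.
Notation V := (vertex d h).

Lemma sum_ind (P : pred V) v : (\sum_(w | P w) Posz (v == w : nat))%R = Posz (P v).
Proof.
case: (boolP (P v)) => Pv.
  rewrite (bigD1 v) //= eqxx big1 ?addr0 //.
  by move=> w /andP [_ /negbTE]; rewrite eq_sym => ->.
by rewrite big1 // => w Pw; case: eqP => // e; move: Pv; rewrite e Pw.
Qed.

Lemma step (j pj : V) k : (depth j + k = h)%N -> (0 < depth j)%N -> is_parent pj j ->
 (forall w, is_parent j w -> in_lattice (fun v => Posz (theta d k.+1) * xb w v - Posz (theta d k) * xb j v)%R) ->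
 in_lattice (fun v => Posz (theta d k.+2) * xb j v - Posz (theta d k.+1) * xb pj v)%R.
Proof.
move=> e h0 hp IH.
have L := lat_add _ _ (lat_scale (Posz (theta d k.+1)) _ (lat_row j)) (lat_sum _ _ IH).
apply: (lat_ext _ _ L) => v /=.
have hc : (#|[set w | is_parent j w]| * theta d k = d.-1 * theta d k)%N.
  case: (ltnP (depth j) h) => hl; first by rewrite card_children.
  have -> : k = 0%N by have := depth_le j; lia.
  by rewrite theta0 !muln0.
rewrite sumrB -big_distrr /= sum_ind.
rewrite (eq_bigl (fun w => w \in [set w | is_parent j w])) => [|w]; last by rewrite inE.
rewrite sumr_const.
have hpar : is_parent v j = (v == pj).
  by apply/idP/eqP => [H|->] //; exact: parent_uniq H hp.
have hr := theta_rec d k hd.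
rewrite /Delta /adj hpar /xb (eq_sym j v).
rewrite -mulr_natr natz.
have njj : ~~ is_parent j j by apply/negP => /parent_depth; lia.
have njp : ~~ is_parent j pj by apply/negP => /parent_depth; move: (parent_depth _ _ hp); lia.
have npj : j != pj by apply/eqP => ej; move: (parent_depth _ _ hp); rewrite ej; lia.
move: hc hr; set N := #|_|; set t0 := theta d k; set t1 := theta d k.+1; set t2 := theta d k.+2 => hc hr.
case: (v =P j) => [->|nvj].
  rewrite (negbTE njj) (negbTE npj) /=.
  nia.
case: (v =P pj) => [->|nvp].
  rewrite (negbTE njp) /=. nia.
rewrite /=; case: (is_parent j v) => /=; nia.
Qed.
End Main.

Lemma main_ind d h (hd : (3 <= d)%N) k : forall j pj : vertex d h,
  (depth j + k = h)%N -> (0 < depth j)%N -> is_parent pj j ->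
  in_lattice (fun v => Posz (theta d k.+2) * xb j v - Posz (theta d k.+1) * xb pj v)%R.
Proof.
elim: k => [|k IH] j pj e h0 hp; apply: (@step d h hd) => // w hw.
  by move: hw; rewrite (negbTE (no_children j w _)) //; lia.
have hw' := parent_depth _ _ hw.
apply: IH => //; lia.
Qed.

Theorem lemma7p1 (d h n : nat) (hd : (3 <= d)%N) (hh : (1 <= h)%N)
  (hn1 : (1 <= n)%N) (hnh : (n <= h)%N) (j pj : vertex d h) :
  depth j = n -> is_parent pj j ->
  in_lattice (fun v => (Posz (theta d (h + 2 - n)) * xb j v
                        - Posz (theta d (h + 1 - n)) * xb pj v)%R).
Proof.
move=> ej hp.
have -> : (h + 2 - n = (h - n).+2)%N by lia.
have -> : (h + 1 - n = (h - n).+1)%N by lia.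
apply: (@main_ind d h hd (h - n) j pj) => //; lia.
Qed.
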